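(* Let $\Gamma$ be a connected graph. Then $\Gamma$ admits a transitive translation-like action by $\mathbb{Z}$ if and only if $\Gamma$ is bilipschitz equivalent to a graph admitting a bi-infinite Hamiltonian path.
   Context: A connected graph is regarded as a metric space on its vertex set via the path-length metric (distance between two vertices is the minimal length of a path joining them). For a group $H$ and a metric space $(X,d)$, a right action $*$ of $H$ on $X$ is translation-like if (i) it is free ($x*h=x$ implies $h=1_H$) and (ii) for every $h\in H$ the set $\{d(x,x*h) : x\in X\}$ is bounded. Two graphs are bilipschitz equivalent if there is a bijection $f$ between their vertex sets and a constant $c>0$ with $\frac1c d(x,y)\le \rho(f(x),f(y))\le c\,d(x,y)$ for all vertices $x,y$, where $d,\rho$ are the path-length metrics. A bi-infinite Hamiltonian path in a graph is a map $P:\mathbb{Z}\to V(\Gamma)$ that is a bijection onto the vertex set and such that $P(i)$ and $P(i+1)$ are adjacent for all $i$. *)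

(* Defs.v *)
From Stdlib Require Import Reals ZArith Arith ClassicalEpsilon.

Definition is_graph {V : Type} (adj : V -> V -> Prop) : Prop :=
  (forall x y, adj x y -> adj y x) /\ (forall x, ~ adj x x).

Inductive walk {V : Type} (adj : V -> V -> Prop) : V -> V -> nat -> Prop :=
  | walk0 : forall x, walk adj x x 0
  | walkS : forall x y z n, adj x y -> walk adj y z n -> walk adj x z (S n).

Definition connected {V : Type} (adj : V -> V -> Prop) : Prop :=
  inhabited V /\ forall x y : V, exists n, walk adj x y n.

(* Path-length metric: the minimal length of a path from x to y
   (well-defined whenever such a path exists, i.e. in connected graphs). *)
Definition gdist {V : Type} (adj : V -> V -> Prop) (x y : V) : nat :=
  epsilon (inhabits 0%nat)
    (fun n => walk adj x y n /\ forall m, walk adj x y m -> (n <= m)%nat).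

Definition Z_right_action {V : Type} (act : V -> Z -> V) : Prop :=
  (forall x, act x 0%Z = x) /\
  (forall x a b, act (act x a) b = act x (a + b)%Z).

Definition translation_like {V : Type} (adj : V -> V -> Prop)
    (act : V -> Z -> V) : Prop :=
  Z_right_action act /\
  (forall x h, act x h = x -> h = 0%Z) /\
  (forall h, exists B : nat, forall x, (gdist adj x (act x h) <= B)%nat).

Definition transitive_action {V : Type} (act : V -> Z -> V) : Prop :=
  forall x y : V, exists h, act x h = y.

Definition bilipschitz_equiv {V W : Type} (adjV : V -> V -> Prop)
    (adjW : W -> W -> Prop) : Prop :=
  exists (f : V -> W) (c : R),
    (forall x y, f x = f y -> x = y) /\ (forall w, exists x, f x = w) /\
    (0 < c)%R /\
    forall x y,
      (INR (gdist adjV x y) / c <= INR (gdist adjW (f x) (f y)))%R /\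
      (INR (gdist adjW (f x) (f y)) <= c * INR (gdist adjV x y))%R.

Definition biinf_hamiltonian_path {W : Type} (adj : W -> W -> Prop)
    (P : Z -> W) : Prop :=
  (forall i j, P i = P j -> i = j) /\ (forall w, exists i, P i = w) /\
  (forall i, adj (P i) (P (i + 1)%Z)).

(* Main.v *)
Require Import Defs.
From Stdlib Require Import Reals ZArith Lia Lra Classical ClassicalEpsilon.

Lemma min_exists (Q : nat -> Prop) : (exists n, Q n) -> exists n, Q n /\ forall m, Q m -> (n <= m)%nat.
Proof.
  intros [n Hn]. revert Hn. induction n as [n IH] using (well_founded_induction lt_wf).
  intros Hn. destruct (classic (exists m, (m < n)%nat /\ Q m)) as [[m [Hm Qm]]|Hno].
  - exact (IH m Hm Qm).
  - exists n; split; auto. intros m Qm. destruct (le_lt_dec n m); auto.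
    exfalso; apply Hno; eauto.
Qed.

Lemma gdist_spec {V} (adj : V -> V -> Prop) x y n : walk adj x y n ->
  walk adj x y (gdist adj x y) /\ forall m, walk adj x y m -> (gdist adj x y <= m)%nat.
Proof.
  intros H. unfold gdist. apply epsilon_spec. apply min_exists. eauto.
Qed.

Lemma walk_app {V} (adj : V -> V -> Prop) x y z n m :
  walk adj x y n -> walk adj y z m -> walk adj x z (n + m).
Proof. induction 1; intros; simpl; auto. econstructor; eauto. Qed.

Lemma walk_rev {V} (adj : V -> V -> Prop) : (forall x y, adj x y -> adj y x) ->
  forall x y n, walk adj x y n -> walk adj y x n.
Proof.
  intros Hs. induction 1. constructor.
  replace (S n) with (n + 1)%nat by lia. eapply walk_app; eauto.
  econstructor; [apply Hs; eauto| constructor].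
Qed.

Lemma walk_mono {V} (a b : V -> V -> Prop) : (forall x y, a x y -> b x y) ->
  forall x y n, walk a x y n -> walk b x y n.
Proof. induction 2; econstructor; eauto. Qed.

Lemma div_le (a b c : nat) : (0 < c)%nat -> (a <= c * b)%nat -> (INR a / INR c <= INR b)%R.
Proof.
  intros Hc H. apply le_INR in H. rewrite mult_INR in H.
  assert (0 < INR c)%R by (apply lt_0_INR; lia).
  apply (Rmult_le_reg_r (INR c)); auto.
  replace (INR a / INR c * INR c)%R with (INR a) by (field; lra). lra.
Qed.

Theorem lemma3p1 (V : Type) (adj : V -> V -> Prop) :
  is_graph adj -> connected adj ->
  ((exists act : V -> Z -> V, translation_like adj act /\ transitive_action act)
   <->
   (exists (W : Type) (adjW : W -> W -> Prop),
      is_graph adjW /\ bilipschitz_equiv adj adjW /\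
      exists P : Z -> W, biinf_hamiltonian_path adjW P)).
Proof.
  intros [Hsym Hirr] [[x0] Hconn]. split.
  - intros [act [[[Hid Hcomp] [Hfree Hbd]] Htrans]].
    destruct (Hbd 1%Z) as [B HB].
    set (adjW := fun x y => x <> y /\ (adj x y \/ y = act x 1%Z \/ x = act y 1%Z)).
    assert (Hincl : forall x y, adj x y -> adjW x y).
    { intros x y H. split; [intros ->; eapply Hirr; eauto| auto]. }
    assert (Hedge : forall x y, adjW x y -> exists k, (k <= S B)%nat /\ walk adj x y k).
    { intros x y [_ [H|[H|H]]].
      - exists 1%nat; split; [lia|]. econstructor; eauto; constructor.
      - destruct (Hconn x y) as [n Hn]. destruct (gdist_spec adj x y n Hn) as [Hw _].
        exists (gdist adj x y); split; auto. specialize (HB x). subst. lia.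
      - destruct (Hconn y x) as [n Hn]. destruct (gdist_spec adj y x n Hn) as [Hw _].
        exists (gdist adj y x); split; [specialize (HB y); subst; lia|].
        apply walk_rev; auto. }
    assert (Hlift : forall x y n, walk adjW x y n -> exists k, (k <= S B * n)%nat /\ walk adj x y k).
    { induction 1. exists 0%nat; split; [lia|constructor].
      destruct (Hedge _ _ H) as [k1 [Hk1 Hw1]]. destruct IHwalk as [k2 [Hk2 Hw2]].
      exists (k1 + k2)%nat; split; [nia|]. eapply walk_app; eauto. }
    assert (Pinj : forall i j, act x0 i = act x0 j -> i = j).
    { intros i j H. assert (act (act x0 i) (j - i)%Z = act x0 i) as E.
      { rewrite Hcomp. replace (i + (j - i))%Z with j by lia. auto. }
      apply Hfree in E. lia. }
    exists V, adjW. split; [|split].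
    + split.
      * intros x y [Hne H]. split; [auto|]. destruct H as [H|[H|H]]; auto.
      * intros x [H _]; auto.
    + exists (fun x => x), (INR (S B)). split; [auto|]. split; [eauto|].
      split; [apply lt_0_INR; lia|]. intros x y.
      destruct (Hconn x y) as [n Hn]. destruct (gdist_spec adj x y n Hn) as [Hw _].
      pose proof (walk_mono _ _ Hincl _ _ _ Hw) as HwW.
      destruct (gdist_spec adjW x y _ HwW) as [HwW' HminW].
      destruct (Hlift _ _ _ HwW') as [k [Hk Hwk]].
      destruct (gdist_spec adj x y _ Hw) as [_ Hmin].
      specialize (Hmin _ Hwk). specialize (HminW _ HwW).
      split.
      * apply div_le; lia.
      * rewrite <- mult_INR. apply le_INR. nia.
    + exists (fun i => act x0 i). split; [|split].
      * exact Pinj.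
      * intros w. apply Htrans.
      * intros i. rewrite <- Hcomp. split; [|auto].
        intros E. rewrite Hcomp in E. apply Pinj in E. lia.
  - intros [W [adjW [[Wsym Wirr] [[f [c [finj [fsurj [cpos Hb]]]]] [P [Pinj [Psurj Padj]]]]]]].
    set (g := fun w => proj1_sig (constructive_indefinite_description _ (fsurj w))).
    assert (fg : forall w, f (g w) = w) by (intros w; unfold g; destruct constructive_indefinite_description; auto).
    assert (gf : forall x, g (f x) = x) by (intros x; apply finj; auto).
    set (Q := fun w => proj1_sig (constructive_indefinite_description _ (Psurj w))).
    assert (PQ : forall w, P (Q w) = w) by (intros w; unfold Q; destruct constructive_indefinite_description; auto).
    assert (QP : forall i, Q (P i) = i) by (intros i; apply Pinj; auto).
    assert (Pw : forall n k, walk adjW (P k) (P (k + Z.of_nat n)%Z) n).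
    { induction n; intros k. rewrite Z.add_0_r; constructor.
      econstructor. apply Padj. replace (k + Z.of_nat (S n))%Z with (k + 1 + Z.of_nat n)%Z by lia.
      apply IHn. }
    assert (Pw2 : forall i j, walk adjW (P i) (P j) (Z.abs_nat (j - i))).
    { intros i j. destruct (Z_le_gt_dec i j).
      - pose proof (Pw (Z.abs_nat (j - i)) i) as H.
        replace (i + Z.of_nat (Z.abs_nat (j - i)))%Z with j in H by lia. exact H.
      - apply walk_rev; auto. replace (Z.abs_nat (j - i)) with (Z.abs_nat (i - j)) by lia.
        pose proof (Pw (Z.abs_nat (i - j)) j) as H.
        replace (j + Z.of_nat (Z.abs_nat (i - j)))%Z with i in H by lia. exact H. }
    exists (fun x h => g (P (Q (f x) + h)%Z)). split; [split; [split|split]|].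
    + intros x. rewrite Z.add_0_r, PQ; auto.
    + intros x a b. rewrite fg, QP. f_equal; f_equal; lia.
    + intros x h E. apply (f_equal f) in E. rewrite fg in E.
      rewrite <- (PQ (f x)) in E at 2. apply Pinj in E. lia.
    + intros h. set (r := (c * INR (Z.abs_nat h))%R).
      destruct (archimed r) as [Hup _].
      assert (0 <= r)%R by (unfold r; apply Rmult_le_pos; [lra|apply pos_INR]).
      assert (0 < up r)%Z by (apply lt_0_IZR; lra).
      exists (Z.to_nat (up r)). intros x.
      destruct (Hb x (g (P (Q (f x) + h)%Z))) as [H1 _].
      rewrite fg in H1.
      pose proof (Pw2 (Q (f x)) (Q (f x) + h)%Z) as Hw.
      destruct (gdist_spec adjW _ _ _ Hw) as [_ Hmin]. specialize (Hmin _ Hw).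
      replace (Q (f x) + h - Q (f x))%Z with h in Hmin by lia. rewrite PQ in Hmin.
      apply le_INR in Hmin.
      set (dV := INR (gdist adj x (g (P (Q (f x) + h)%Z)))) in *.
      assert (dV <= r)%R.
      { unfold r. replace dV with (dV / c * c)%R by (field; lra).
        rewrite Rmult_comm. apply Rmult_le_compat_l; lra. }
      assert (dV < INR (Z.to_nat (up r)))%R.
      { rewrite INR_IZR_INZ, Z2Nat.id by lia. lra. }
      apply INR_lt in H3. lia.
    + intros x y. exists (Q (f y) - Q (f x))%Z.
      replace (Q (f x) + (Q (f y) - Q (f x)))%Z with (Q (f y)) by lia.
      rewrite PQ, gf; auto.
Qed.
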